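(* Let $(A,\pi,N,\phi)$ be a Poisson quasi-Nijenhuis Lie algebroid. Then for all $X\in\Gamma(A)$ and $\alpha,\beta\in\Gamma(A^* )$, $$\langle\mathcal T_{N^*}(\alpha,\beta),X\rangle=\phi(\pi^\sharp\alpha,\pi^\sharp\beta,X),$$ where $\mathcal T_{N^*}(\alpha,\beta)=[N^*\alpha,N^*\beta]_\pi-N^*[\alpha,\beta]^{N^*}_\pi$ is the torsion of $N^*$ with respect to $[\cdot,\cdot]_\pi$.
   Context: $(A,[\cdot,\cdot],\rho)$ is a Lie algebroid with differential $\mathrm{d}$. For $\pi\in\Gamma(\wedge^2A)$, $\pi^\sharp(\alpha)=i_\alpha\pi$, and $[\alpha,\beta]_\pi=\mathcal L_{\pi^\sharp\alpha}\beta-\mathcal L_{\pi^\sharp\beta}\alpha-\mathrm{d}(\pi(\alpha,\beta))$. For $N:A\to A$: $[X,Y]_N=[NX,Y]+[X,NY]-N[X,Y]$, $\mathcal T_N(X,Y)=[NX,NY]-N[X,Y]_N$; $[\alpha,\beta]^{N^*}_\pi=[N^*\alpha,\beta]_\pi+[\alpha,N^*\beta]_\pi-N^*[\alpha,\beta]_\pi$. $N$ is compatible with a Poisson bivector $\pi$ if $N\pi^\sharp=\pi^\sharp N^*$ and $[\alpha,\beta]_{N\pi}=[\alpha,\beta]^{N^*}_\pi$ (with $[\cdot,\cdot]_{N\pi}$ the analogous bracket for the bivector $N\pi$). A Poisson quasi-Nijenhuis Lie algebroid $(A,\pi,N,\phi)$: $\pi$ Poisson ($[\pi,\pi]=0$),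 $N$ compatible with $\pi$, $\phi\in\Gamma(\wedge^3A^* )$ closed, $\mathcal T_N(X,Y)=-\pi^\sharp(i_{X\wedge Y}\phi)$ and $\mathrm{d}(i_N\phi)=0$, where $(i_N\phi)(X,Y,Z)=\phi(NX,Y,Z)+\phi(X,NY,Z)+\phi(X,Y,NZ)$. *)

(* Defs.v *)
(* Algebraic (Lie--Rinehart) model of a Lie algebroid:
   C      : commutative ring  (plays the role of C^oo(M)),
   V      : C-module          (plays the role of Gamma(A)),
   1-forms (sections of A^* ) : C-linear maps V -> C,
   k-forms                    : C-multilinear alternating maps V^k -> C,
   bivectors pi               : given through pi^# : (V -> C) -> V,
                                with pi(alpha,beta) := <beta, pi^# alpha>. *)
From HB Require Import structures.
From mathcomp Require Import all_boot all_order all_algebra.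
Set Implicit Arguments. Unset Strict Implicit. Unset Printing Implicit Defensive.
Import GRing.Theory.
Local Open Scope ring_scope.

Section Defs.
Variables (C : comNzRingType) (V : lmodType C).

Definition linform (a : V -> C) : Prop :=
  forall (c : C) (x y : V), a (c *: x + y) = c * a x + a y.

Definition linendo (N : V -> V) : Prop :=
  forall (c : C) (x y : V), N (c *: x + y) = c *: N x + N y.

Record lie_algebroid (br : V -> V -> V) (rho : V -> C -> C) : Prop := {
  br_addl : forall X Y Z, br (X + Y) Z = br X Z + br Y Z;
  br_skew : forall X Y, br X Y = - br Y X;
  br_jacobi : forall X Y Z,
    br X (br Y Z) + br Y (br Z X) + br Z (br X Y) = 0;
  br_leibniz : forall X Y (f : C), br X (f *: Y) = f *: br X Y + rho X f *: Y;
  rho_linear : forall (c : C) X Y f, rho (c *: X + Y) f = c * rho X f + rho Y f;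
  rho_add : forall X f g, rho X (f + g) = rho X f + rho X g;
  rho_mul : forall X f g, rho X (f * g) = rho X f * g + f * rho X g;
  rho_br : forall X Y f, rho (br X Y) f = rho X (rho Y f) - rho Y (rho X f)
}.

Definition bivector_sharp (P : (V -> C) -> V) : Prop :=
  (forall (c : C) a b, linform a -> linform b ->
      P (fun x => c * a x + b x) = c *: P a + P b) /\
  (forall a b, linform a -> linform b -> b (P a) = - a (P b)).

Definition three_form (phi : V -> V -> V -> C) : Prop :=
  (forall (c : C) x x' y z, phi (c *: x + x') y z = c * phi x y z + phi x' y z) /\
  (forall (c : C) x y y' z, phi x (c *: y + y') z = c * phi x y z + phi x y' z) /\
  (forall (c : C) x y z z', phi x y (c *: z + z') = c * phi x y z + phi x y z') /\
  (forall x z, phi x x z = 0) /\ (forall x y, phi x y y = 0).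

Variables (br : V -> V -> V) (rho : V -> C -> C).

Definition lie1 (X : V) (b : V -> C) : V -> C :=
  fun Y => rho X (b Y) - b (br X Y).

(* Koszul bracket of 1-forms for the bivector with sharp map P:
   [a,b]_pi = L_{P a} b - L_{P b} a - d(pi(a,b)),  pi(a,b) = b (P a),
   and (d f)(Y) = rho(Y) f *)
Definition bracket_pi (P : (V -> C) -> V) (a b : V -> C) : V -> C :=
  fun Y => lie1 (P a) b Y - lie1 (P b) a Y - rho Y (b (P a)).

Definition dualN (N : V -> V) (a : V -> C) : V -> C := fun x => a (N x).

Definition bracket_pi_N (N : V -> V) (P : (V -> C) -> V) (a b : V -> C) : V -> C :=
  fun Y => bracket_pi P (dualN N a) b Y + bracket_pi P a (dualN N b) Y
           - bracket_pi P a b (N Y).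

Definition bracketN (N : V -> V) (X Y : V) : V :=
  br (N X) Y + br X (N Y) - N (br X Y).
Definition torsionN (N : V -> V) (X Y : V) : V :=
  br (N X) (N Y) - N (bracketN N X Y).

Definition torsion_dualN (N : V -> V) (P : (V -> C) -> V) (a b : V -> C) : V -> C :=
  fun X => bracket_pi P (dualN N a) (dualN N b) X - dualN N (bracket_pi_N N P a b) X.

(* Schouten bracket [pi,pi] of a bivector with itself, evaluated on 1-forms,
   via the standard identity (1/2)[pi,pi](a,b,.) = pi^#[a,b]_pi - [pi^# a, pi^# b].
   (We use the half, so no division by 2 is needed; vanishing is unaffected.) *)
Definition half_schouten (P : (V -> C) -> V) (a b g : V -> C) : C :=
  g (P (bracket_pi P a b) - br (P a) (P b)).

Definition poisson (P : (V -> C) -> V) : Prop :=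
  forall a b g, linform a -> linform b -> linform g -> half_schouten P a b g = 0.

(* N compatible with pi: N pi^# = pi^# N^*  and [.,.]_{N pi} = [.,.]^{N^*}_pi,
   where (N pi)^# = N o pi^# *)
Definition compatible (N : V -> V) (P : (V -> C) -> V) : Prop :=
  (forall a, linform a -> N (P a) = P (dualN N a)) /\
  (forall a b, linform a -> linform b -> forall Y,
      bracket_pi (fun g => N (P g)) a b Y = bracket_pi_N N P a b Y).

Definition d3 (phi : V -> V -> V -> C) (X0 X1 X2 X3 : V) : C :=
    rho X0 (phi X1 X2 X3) - rho X1 (phi X0 X2 X3)
  + rho X2 (phi X0 X1 X3) - rho X3 (phi X0 X1 X2)
  - phi (br X0 X1) X2 X3 + phi (br X0 X2) X1 X3 - phi (br X0 X3) X1 X2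
  - phi (br X1 X2) X0 X3 + phi (br X1 X3) X0 X2 - phi (br X2 X3) X0 X1.

Definition closed3 (phi : V -> V -> V -> C) : Prop :=
  forall X0 X1 X2 X3, d3 phi X0 X1 X2 X3 = 0.

Definition iN (N : V -> V) (phi : V -> V -> V -> C) : V -> V -> V -> C :=
  fun X Y Z => phi (N X) Y Z + phi X (N Y) Z + phi X Y (N Z).

(* i_{X /\ Y} phi := i_X i_Y phi = phi(Y, X, .) *)
Definition i_wedge (X Y : V) (phi : V -> V -> V -> C) : V -> C :=
  fun Z => phi Y X Z.

Definition PqN (P : (V -> C) -> V) (N : V -> V) (phi : V -> V -> V -> C) : Prop :=
  lie_algebroid br rho /\ bivector_sharp P /\ poisson P /\ linendo N /\
  compatible N P /\ three_form phi /\ closed3 phi /\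
  (forall X Y, torsionN N X Y = - P (i_wedge X Y phi)) /\
  closed3 (iN N phi).

End Defs.

(* Main.v *)
Require Import Defs.
From HB Require Import structures.
From mathcomp Require Import all_boot all_order all_algebra.
Import GRing.Theory.
Set Implicit Arguments.
Local Open Scope ring_scope.

Lemma lin_add (C : comNzRingType) (V : lmodType C) (a : V -> C) :
  linform a -> forall x y, a (x + y) = a x + a y.
Proof. by move=> la x y; rewrite -{1}(scale1r x) la mul1r. Qed.
Lemma lin_opp (C : comNzRingType) (V : lmodType C) (a : V -> C) :
  linform a -> forall x, a (- x) = - a x.
Proof.
move=> la x; have h0 : a 0 = 0.
  by have := la 1 0 0; rewrite scaler0 addr0 mul1r => h; have := congr1 (fun t => t - a 0) h; rewrite /= addrK subrr.
by apply/eqP; rewrite -(subr_eq0) opprK -(lin_add la) addNr h0.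
Qed.
Lemma lin_sub (C : comNzRingType) (V : lmodType C) (a : V -> C) :
  linform a -> forall x y, a (x - y) = a x - a y.
Proof. by move=> la x y; rewrite (lin_add la) (lin_opp la). Qed.

Inductive zex := zV of nat | zA of zex & zex | zO of zex | zZ.

Fixpoint zev (M : zmodType) (vs : seq M) e : M :=
  match e with zV i => nth 0 vs i | zA a b => zev M vs a + zev M vs b
  | zO a => - zev M vs a | zZ => 0 end.

Fixpoint zco e (i : nat) : int :=
  match e with zV j => (i == j)%:Z | zA a b => zco a i + zco b i
  | zO a => - zco a i | zZ => 0 end.

Fixpoint evc (M : zmodType) (vs : seq M) (c : nat -> int) : M :=
  match vs with [::] => 0 | x :: vs' => x *~ c 0%N + evc M vs' (fun i => c i.+1) end.

Arguments zev {M}.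
Arguments evc {M}.

Lemma evcD (M : zmodType) (vs : seq M) c1 c2 :
  evc vs (fun i => c1 i + c2 i) = evc vs c1 + evc vs c2.
Proof.
elim: vs c1 c2 => [|x vs IH] c1 c2 /=; first by rewrite addr0.
by rewrite IH mulrzDr addrACA.
Qed.

Lemma evcN (M : zmodType) (vs : seq M) c :
  evc vs (fun i => - c i) = - evc vs c.
Proof.
elim: vs c => [|x vs IH] c /=; first by rewrite oppr0.
by rewrite IH mulrNz opprD.
Qed.

Lemma evc0 (M : zmodType) (vs : seq M) : evc vs (fun _ => 0) = 0.
Proof. by elim: vs => [|x vs IH] //=; rewrite IH addr0. Qed.

Lemma evc_ext (M : zmodType) (vs : seq M) c1 c2 :
  (forall i, (i < size vs)%N -> c1 i = c2 i) -> evc vs c1 = evc vs c2.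
Proof.
elim: vs c1 c2 => [|x vs IH] c1 c2 //= H.
rewrite H // (IH (fun i => c1 i.+1) (fun i => c2 i.+1)) // => i Hi.
by apply: H.
Qed.

Lemma evc1 (M : zmodType) (vs : seq M) j :
  evc vs (fun i => (i == j)%:Z) = nth 0 vs j.
Proof.
elim: vs j => [|x vs IH] j /=; first by rewrite nth_nil.
case: j => [|j] /=.
  rewrite mulr1z (@evc_ext _ vs _ (fun _ => 0)) // evc0; by rewrite addr0.
by rewrite mulr0z add0r IH.
Qed.

Lemma zev_evc (M : zmodType) (vs : seq M) e : zev vs e = evc vs (zco e).
Proof.
elim: e => [j|a IHa b IHb|a IHa|] /=.
- by rewrite evc1.
- by rewrite IHa IHb evcD.
- by rewrite IHa evcN.
- by rewrite evc0.
Qed.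

Lemma zex_eq (M : zmodType) (vs : seq M) e1 e2 :
  all (fun i => zco e1 i == zco e2 i) (iota 0 (size vs)) ->
  zev vs e1 = zev vs e2.
Proof.
move=> /allP H; rewrite !zev_evc; apply: evc_ext => i Hi.
by apply/eqP/H; rewrite mem_iota.
Qed.

Definition zS a b := zA a (zO b).

Lemma key (M : zmodType) (p1 q q' r1 w2 r2 s s' t t' p3 u v f : M) :
  q' - (q + u - v) = f ->
  p1 - q - (r1 - w2) - t =
    (p1 - q - (r2 - s) - t) + (p3 - v - (r1 - w2) - t) - (p3 - u - (r2 - s') - t') ->
  (p1 - q - (r2 - s) - t) - (p1 - q' - (r2 - s') - t') = f.
Proof.
move=> HT H2.
have E := @zex_eq M [:: p1; q; q'; r1; w2; r2; s; s'; t; t'; p3; u; v; f]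
  (zS (zS (zS (zS (zV 0) (zV 1)) (zS (zV 5) (zV 6))) (zV 8))
      (zS (zS (zS (zV 0) (zV 2)) (zS (zV 5) (zV 7))) (zV 9)))
  (zS (zS (zV 2) (zS (zA (zV 1) (zV 11)) (zV 12)))
      (zS (zS (zS (zS (zV 0) (zV 1)) (zS (zV 3) (zV 4))) (zV 8))
          (zS (zA (zS (zS (zS (zV 0) (zV 1)) (zS (zV 5) (zV 6))) (zV 8))
                  (zS (zS (zS (zV 10) (zV 12)) (zS (zV 3) (zV 4))) (zV 8)))
              (zS (zS (zS (zV 10) (zV 11)) (zS (zV 5) (zV 7))) (zV 9))))) isT.
rewrite /= in E; rewrite E HT H2 subrr subr0 //.
Qed.
Theorem mainTheorem4 (C : comNzRingType) (V : lmodType C)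
  (br : V -> V -> V) (rho : V -> C -> C)
  (P : (V -> C) -> V) (N : V -> V) (phi : V -> V -> V -> C) :
  PqN br rho P N phi ->
  forall (X : V) (a b : V -> C), linform a -> linform b ->
    torsion_dualN br rho N P a b X = phi (P a) (P b) X.
Proof.
move=> [_ [[Pl Psk] [_ [HN [[Hc1 Hc2] [[p1 [p2 [p3 [p4 p5]]]] [_ [Htor _]]]]]]]] X a b la lb.
have lNb : linform (dualN N b) by move=> c x y; rewrite /dualN HN lb.
have lNa : linform (dualN N a) by move=> c x y; rewrite /dualN HN la.
have bN : forall x y z, b (N (x + y - z)) = b (N x) + b (N y) - b (N z).
  move=> x y z; change (dualN N b (x + y - z) = dualN N b x + dualN N b y - dualN N b z).
  by rewrite (lin_sub lNb) (lin_add lNb).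
have f1 : forall x x' y z, phi (x + x') y z = phi x y z + phi x' y z.
  by move=> x x' y z; move: (p1 1 x x' y z); rewrite scale1r mul1r.
have f2 : forall x y y' z, phi x (y + y') z = phi x y z + phi x y' z.
  by move=> x y y' z; move: (p2 1 x y y' z); rewrite scale1r mul1r.
have f3 : forall x y z z', phi x y (z + z') = phi x y z + phi x y z'.
  by move=> x y z z'; move: (p3 1 x y z z'); rewrite scale1r mul1r.
have alt : forall x y z, phi x y z = - phi y x z.
  move=> x y z; have := p4 (x + y) z.
  rewrite f1 !f2 !p4 add0r addr0.
  by move/eqP; rewrite addr_eq0 => /eqP.
have alt2 : forall x y z, phi x y z = - phi x z y.
  move=> x y z; have := p5 x (y + z).
  rewrite !f3 !f2 !p5 add0r addr0.
  by move/eqP; rewrite addr_eq0 => /eqP ->; rewrite opprK.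
have H1 := Hc2 a b la lb (N X).
have H2 := Hc2 a (dualN N b) la lNb X.
have T := congr1 b (Htor (P a) X).
have lc : linform (i_wedge (P a) X phi) by move=> c x y; rewrite /i_wedge p3.
rewrite /torsionN /bracketN (lin_sub lb) (lin_opp lb) Psk // opprK /i_wedge bN in T.
rewrite alt alt2 opprK in T.
rewrite /torsion_dualN /dualN -H1.
move: H2 T; rewrite /bracket_pi_N /bracket_pi /lie1 /=.
rewrite (Hc1 a la) (Hc1 _ lNb).
rewrite /dualN.
move=> H2 T.
rewrite ?(Hc1 a la) ?(Hc1 b lb) in H2 T *.
rewrite /dualN in H2 T *.
exact: (@key _ _ _ _ _ _ _ _ _ _ _ _ _ _ _ T H2).
Qed.
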